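(* Let $\sigma_E^2=b\,\sigma_A^2$ for a fixed constant $b\in(0,\infty)$. Then for every fixed $r_A>0$, $r_E>0$, as $|\rho|\to1$ and $\sigma_A^2\to0$ (hence $\sigma_E^2\to 0$), $$f_{\hat R_A,\hat R_E}(r_A,r_E)=\frac{2r_Ee^{-r_E^2/p}}{p}\cdot\frac{e^{-\frac{(r_A-|\rho|r_E)^2}{p(1-|\rho|^2)+\sigma_A^2+\sigma_E^2}}}{\sqrt{\pi\big(p(1-|\rho|^2)+\sigma_A^2+\sigma_E^2\big)}}+O\Big(\sqrt{1-|\rho|^2+\sigma_A^2}\Big),$$ i.e. the product of a Rayleigh density (of $\hat R_E$, scale $\sqrt{p/2}$) and a conditional normal density of $\hat R_A$ with mean $|\rho|r_E$ and variance $\big(p(1-|\rho|^2)+\sigma_A^2+\sigma_E^2\big)/2$. The same holds for $f_{\hat R_B,\hat R_E}$ with $A$ replaced by $B$, under $\sigma_E^2=b'\sigma_B^2$ for a fixed $b'\in(0,\infty)$.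
   Context: Fix $p>0$, $\rho\in\mathbb C$ with $|\rho|<1$, and $\sigma_A^2,\sigma_B^2,\sigma_E^2>0$. Let $(H,H_E)$ be a zero-mean circularly-symmetric complex Gaussian (ZMCSCG) vector with covariance $p\begin{pmatrix}1&\rho\\ \bar\rho&1\end{pmatrix}$; let $W_A,W_B,W_E$ be ZMCSCG with variances $\sigma_A^2,\sigma_B^2,\sigma_E^2$, mutually independent and independent of $(H,H_E)$. Define $\hat H_A=H+W_A$, $\hat H_B=H+W_B$, $\hat H_E=H_E+W_E$, envelopes $\hat R_X=|\hat H_X|$, and let $f_{\hat R_A,\hat R_E}$ denote the joint density of $(\hat R_A,\hat R_E)$. The $O(\cdot)$ term is bounded in absolute value by a constant (possibly depending on $r_A,r_E,p,b$) times $\sqrt{1-|\rho|^2+\sigma_A^2}$ in the limit. *)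

(* Defs.v *)
From Stdlib Require Import Reals.
From Coquelicot Require Import Coquelicot.
Open Scope R_scope.

(* The complex correlation coefficient rho is represented by its real part
   [rr] and imaginary part [ri]; |rho|^2 = rr^2 + ri^2. *)
Definition rho_abs2 (rr ri : R) : R := rr ^ 2 + ri ^ 2.

(* Density (w.r.t. Lebesgue measure on C^2 = R^4) of a zero-mean circularly
   symmetric complex Gaussian vector (Z1, Z2) with Hermitian covariance
   K = [[k11, k12], [conj k12, k22]], k12 = k12r + i k12i:
     f(z) = exp(- z^H K^{-1} z) / (pi^2 det K),
   z1 = x1 + i y1, z2 = x2 + i y2. *)
Definition cscg2_density (k11 k22 k12r k12i : R) (x1 y1 x2 y2 : R) : R :=
  let D := k11 * k22 - (k12r ^ 2 + k12i ^ 2) in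
  (* Re (k12 * conj z1 * z2) *)
  let re_cross := k12r * (x1 * x2 + y1 * y2) - k12i * (x1 * y2 - y1 * x2) in
  let q := (k22 * (x1 ^ 2 + y1 ^ 2) + k11 * (x2 ^ 2 + y2 ^ 2) - 2 * re_cross) / D in
  exp (- q) / (PI ^ 2 * D).

(* Joint density of the envelopes (|Z1|, |Z2|) at (r1, r2) > 0: polar change
   of variables in each complex coordinate. *)
Definition envelope_density (k11 k22 k12r k12i : R) (r1 r2 : R) : R :=
  r1 * r2 *
  RInt (fun t1 =>
    RInt (fun t2 =>
      cscg2_density k11 k22 k12r k12i
        (r1 * cos t1) (r1 * sin t1) (r2 * cos t2) (r2 * sin t2))
      0 (2 * PI))
    0 (2 * PI).

(* Model: (H, H_E) ZMCSCG with covariance p [[1, rho], [conj rho, 1]];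
   W_X, W_E independent ZMCSCG with variances sX, sE, independent of (H,H_E).
   Then (H + W_X, H_E + W_E) is ZMCSCG with covariance
   [[p + sX, p rho], [p conj rho, p + sE]].  f_{R_X, R_E}: *)
Definition f_RX_RE (p rr ri sX sE : R) (rX rE : R) : R :=
  envelope_density (p + sX) (p + sE) (p * rr) (p * ri) rX rE.

Definition approx_density (p rr ri sX sE : R) (rX rE : R) : R :=
  let a := sqrt (rho_abs2 rr ri) in
  let V := p * (1 - rho_abs2 rr ri) + sX + sE in
  (2 * rE * exp (- rE ^ 2 / p) / p) *
  (exp (- (rX - a * rE) ^ 2 / V) / sqrt (PI * V)).

Definition envelope_asymptotic (p b rX rE : R) : Prop :=
  exists C delta : R, 0 < delta /\
    forall rr ri s : R,
      rho_abs2 rr ri < 1 -> 0 < s ->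
      1 - rho_abs2 rr ri + s < delta ->
      Rabs (f_RX_RE p rr ri s (b * s) rX rE - approx_density p rr ri s (b * s) rX rE)
        <= C * sqrt (1 - rho_abs2 rr ri + s).

(* Main.v *)
Require Import Defs.
From Stdlib Require Import Reals Lra Lia ZArith.
From Coquelicot Require Import Coquelicot.
Open Scope R_scope.

Lemma exRI (f : R -> R) : (forall x, ex_derive f x) -> forall a b, ex_RInt f a b.
Proof. intros H a b. apply (@ex_RInt_continuous R_CompleteNormedModule). intros z _. apply (@ex_derive_continuous R_AbsRing R_NormedModule), H. Qed.

Lemma RInt_lin (f g : R -> R) a b c d : ex_RInt f a b -> ex_RInt g a b ->
  RInt (fun t => c * f t + d * g t) a b = c * RInt f a b + d * RInt g a b.
Proof.
  intros Hf Hg.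
  assert (E := RInt_plus (V:=R_CompleteNormedModule) (fun t => scal c (f t)) (fun t => scal d (g t)) a b
     (ex_RInt_scal _ _ _ _ Hf) (ex_RInt_scal _ _ _ _ Hg)).
  rewrite (RInt_scal (V:=R_CompleteNormedModule) f) in E by auto. rewrite (RInt_scal (V:=R_CompleteNormedModule) g) in E by auto. exact E.
Qed.

Lemma RInt_extR (f g : R -> R) a b : (forall x, Rmin a b < x < Rmax a b -> f x = g x) ->
  RInt f a b = RInt g a b.
Proof. apply (RInt_ext (V:=R_CompleteNormedModule)). Qed.

Definition Sw (n : nat) := RInt (fun t => sin t ^ n) 0 PI.

Lemma ex_sinp n a b : ex_RInt (fun t => sin t ^ n) a b.
Proof. apply exRI. intros x. auto_derive. auto. Qed.

Lemma S_rec n : INR (n+2) * Sw (n+2) = INR (n+1) * Sw n.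
Proof.
  assert (H := is_RInt_derive (fun t => sin t ^ (n+1) * cos t)
    (fun t => INR (n+1) * sin t ^ n - INR (n+2) * sin t ^ (n+2)) 0 PI).
  assert (H' : RInt (fun t => INR (n+1) * sin t ^ n - INR (n+2) * sin t ^ (n+2)) 0 PI = 0).
  { refine (_ (H _ _)).
    - intros H1. apply is_RInt_unique in H1. rewrite H1.
      simpl. rewrite sin_PI, sin_0. replace (n+1)%nat with (S n) by lia. simpl. unfold minus, plus, opp; simpl. ring.
    - intros x _. auto_derive. auto.
      replace (n+1)%nat with (S n) by lia.
      replace (n+2)%nat with (S (S n)) by lia.
      rewrite !S_INR. cbn [pred pow].
      assert (cos x ^ 2 = 1 - sin x ^2) by (rewrite <- (sin2_cos2 x); unfold Rsqr; ring).
      simpl in H0. ring_simplify. replace (cos x ^ 2) with (1 - sin x ^2) by (simpl; lra). ring.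
    - intros x _. apply (@ex_derive_continuous R_AbsRing R_NormedModule). auto_derive. auto. }
  unfold Sw.
  assert (E : RInt (fun t => INR (n+1) * sin t ^ n - INR (n+2) * sin t ^ (n+2)) 0 PI =
     RInt (fun t => INR (n+1) * sin t ^ n + (- INR (n+2)) * sin t ^ (n+2)) 0 PI).
  { apply RInt_extR. intros; ring. }
  rewrite E in H'.
  rewrite RInt_lin in H' by apply ex_sinp.
  lra.
Qed.

Lemma Sw0 : Sw 0 = PI.
Proof. unfold Sw. simpl. rewrite RInt_const. unfold scal; simpl. unfold mult; simpl. ring. Qed.

Lemma Sw1 : Sw 1 = 2.
Proof.
  unfold Sw.
  assert (H := is_RInt_derive (fun t => - cos t) (fun t => sin t ^ 1) 0 PI).
  refine (_ (H _ _)).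
  - intros H1. apply is_RInt_unique in H1. rewrite H1. simpl. rewrite cos_PI, cos_0.
    unfold minus, plus, opp; simpl. ring.
  - intros x _. auto_derive. auto. ring.
  - intros x _. apply (@ex_derive_continuous R_AbsRing R_NormedModule). auto_derive. auto.
Qed.

Lemma Sw_ge0 n : 0 <= Sw n.
Proof.
  unfold Sw. apply RInt_ge_0. apply Rlt_le, PI_RGT_0. apply ex_sinp.
  intros x [H1 H2]. apply pow_le. apply sin_ge_0; lra.
Qed.

Lemma Sw_decr n : Sw (n+1) <= Sw n.
Proof.
  unfold Sw. apply RInt_le. apply Rlt_le, PI_RGT_0. apply ex_sinp. apply ex_sinp.
  intros x [H1 H2]. replace (n+1)%nat with (S n) by lia. simpl.
  assert (0 <= sin x) by (apply sin_ge_0; lra).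
  assert (sin x <= 1) by apply SIN_bound.
  assert (0 <= sin x ^ n) by (apply pow_le; lra).
  nra.
Qed.

Lemma Sw_prod n : Sw n * Sw (n+1) = 2 * PI / INR (n+1).
Proof.
  induction n.
  - rewrite Sw0. simpl. rewrite Sw1. field.
  - assert (H := S_rec n).
    replace (S n + 1)%nat with (n+2)%nat by lia.
    replace (S n) with (n+1)%nat by lia.
    assert (0 < INR (n+1)) by (apply lt_0_INR; lia).
    assert (0 < INR (n+2)) by (apply lt_0_INR; lia).
    apply Rmult_eq_reg_l with (INR (n+2)); [|lra].
    replace (INR (n + 2) * (Sw (n + 1) * Sw (n + 2))) with (Sw (n+1) * (INR (n+2) * Sw (n+2))) by ring.
    rewrite H.
    replace (Sw (n + 1) * (INR (n + 1) * Sw n)) with (INR (n+1) * (Sw n * Sw (n+1))) by ring.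
    rewrite IHn. replace (n+1+1)%nat with (n+2)%nat by lia. field. lra.
Qed.

Lemma Sw_sq_lo n : 2 * PI / INR (n+1) <= Sw n ^ 2.
Proof.
  rewrite <- Sw_prod. assert (H1 := Sw_decr n). assert (H2 := Sw_ge0 (n+1)). simpl. nra.
Qed.

Lemma Sw_sq_hi n : (1 <= n)%nat -> Sw n ^ 2 <= 2 * PI / INR n.
Proof.
  intros Hn. destruct n as [|n]. lia.
  replace (S n) with (n+1)%nat by lia.
  rewrite <- Sw_prod. assert (H1 := Sw_decr n). assert (H2 := Sw_ge0 (n+1)). simpl. nra.
Qed.

Lemma exp_le_mono x y : x <= y -> exp x <= exp y.
Proof. intros H. destruct (Rle_lt_or_eq_dec _ _ H). apply Rlt_le, exp_increasing; auto. subst; lra. Qed.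

Lemma exp_pow x n : exp x ^ n = exp (INR n * x).
Proof.
  induction n. simpl. rewrite Rmult_0_l, exp_0. auto.
  rewrite S_INR. simpl. rewrite IHn. rewrite <- exp_plus. f_equal. ring.
Qed.

Lemma one_minus_le_exp x : 1 - x <= exp (- x).
Proof. assert (H := exp_ineq1_le (- x)). lra. Qed.

Lemma pt_lower x m : 0 <= x <= 1 -> (1 - x) ^ m <= exp (- (INR m * x)).
Proof.
  intros Hx. replace (- (INR m * x)) with (INR m * (- x)) by ring.
  rewrite <- exp_pow. apply pow_incr. split. lra. apply one_minus_le_exp.
Qed.

Lemma one_minus_ge x : 0 <= x <= 1/2 -> exp (- (x + 2 * x ^ 2)) <= 1 - x.
Proof.
  intros Hx.
  assert (H := exp_ineq1_le (x / (1 - x))).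
  assert (E : 1 + x / (1 - x) = / (1 - x)) by (field; lra).
  rewrite E in H.
  assert (H2 : exp (- (x / (1 - x))) <= 1 - x).
  { rewrite exp_Ropp. replace (1 - x) with (/ / (1 - x)) at 2 by (field; lra).
    apply Rinv_le_contravar. apply Rinv_0_lt_compat; lra. exact H. }
  eapply Rle_trans; [|exact H2]. apply exp_le_mono.
  assert (x / (1 - x) <= x + 2 * x ^ 2).
  { apply Rmult_le_reg_r with (1 - x). lra. unfold Rdiv. rewrite Rmult_assoc, Rinv_l by lra. nra. }
  lra.
Qed.

Lemma pt_upper x m k : 0 <= x <= 1 -> (2 * k <= m)%nat ->
  exp (- (INR m * x)) <= (1 - x) ^ m + 2 * INR m * x ^ 2 * (1 - x) ^ k + exp (- (INR m / 2)).
Proof.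
  intros Hx Hkm.
  assert (Hm0 : 0 <= INR m) by apply pos_INR.
  assert (Hkm' : 2 * INR k <= INR m) by (replace 2 with (INR 2) by (simpl; lra); rewrite <- mult_INR; apply le_INR; lia).
  assert (Hk0 : 0 <= INR k) by apply pos_INR.
  assert (P1 : 0 <= (1 - x) ^ m) by (apply pow_le; lra).
  assert (P2 : 0 <= (1 - x) ^ k) by (apply pow_le; lra).
  assert (P3 : 0 < exp (- (INR m / 2))) by apply exp_pos.
  destruct (Rle_lt_dec x (1/2)) as [Hh|Hh].
  - assert (A := one_minus_ge x (conj (proj1 Hx) Hh)).
    assert (Bm : exp (- (INR m * x)) * exp (- (2 * INR m * x ^ 2)) <= (1 - x) ^ m).
    { rewrite <- exp_plus. replace (- (INR m * x) + - (2 * INR m * x ^ 2)) with (INR m * (- (x + 2 * x ^ 2))) by ring.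
      rewrite <- exp_pow. apply pow_incr. split. apply Rlt_le, exp_pos. exact A. }
    assert (Bk : exp (- (INR m * x)) <= (1 - x) ^ k).
    { eapply Rle_trans; [|apply pow_incr; split; [apply Rlt_le, exp_pos| exact A]].
      rewrite exp_pow. apply exp_le_mono. assert (2 * x ^ 2 <= x) by nra. assert (INR k * (x + 2 * x ^ 2) <= INR k * (2 * x)) by (apply Rmult_le_compat_l; lra). nra. }
    assert (C : 1 - 2 * INR m * x ^ 2 <= exp (- (2 * INR m * x ^ 2))) by (assert (T := exp_ineq1_le (- (2 * INR m * x ^ 2))); lra).
    assert (Q : 0 <= 2 * INR m * x ^ 2) by (apply Rmult_le_pos; [lra| apply pow2_ge_0]).
    assert (E0 : 0 < exp (- (INR m * x))) by apply exp_pos.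
    nra.
  - assert (exp (- (INR m * x)) <= exp (- (INR m / 2))) by (apply exp_le_mono; nra).
    assert (0 <= 2 * INR m * x ^ 2 * (1 - x) ^ k) by (apply Rmult_le_pos; [apply Rmult_le_pos; [lra|apply pow2_ge_0]|auto]).
    lra.
Qed.

Lemma RInt_plusR (f g : R -> R) a b : ex_RInt f a b -> ex_RInt g a b ->
  RInt (fun t => f t + g t) a b = RInt f a b + RInt g a b.
Proof. intros. rewrite <- (Rmult_1_l (RInt f a b)), <- (Rmult_1_l (RInt g a b)).
  rewrite <- RInt_lin by auto. apply RInt_extR. intros; ring. Qed.

Lemma RInt_scalR (f : R -> R) a b c : ex_RInt f a b ->
  RInt (fun t => c * f t) a b = c * RInt f a b.
Proof. intros. exact (RInt_scal (V:=R_CompleteNormedModule) f a b c H). Qed.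

Lemma RInt_constR a b (c : R) : RInt (fun _ => c) a b = (b - a) * c.
Proof. exact (RInt_const (V:=R_CompleteNormedModule) a b c). Qed.

Definition M (k : R) := RInt (fun t => exp (- (2 * k * cos t ^ 2))) 0 PI.

Lemma ex_M k a b : ex_RInt (fun t => exp (- (2 * k * cos t ^ 2))) a b.
Proof. apply exRI. intros. auto_derive. auto. Qed.

Lemma sin_pow_cos t m : sin t ^ (2 * m) = (1 - cos t ^ 2) ^ m.
Proof. rewrite pow_mult. f_equal. assert (H := sin2_cos2 t). unfold Rsqr in H. simpl. lra. Qed.

Lemma cos2_bound t : 0 <= cos t ^ 2 <= 1.
Proof. split. apply pow2_ge_0. assert (H := sin2_cos2 t). unfold Rsqr in H. simpl. nra. Qed.

Lemma M_lower k m : 2 * k <= INR m -> Sw (2 * m) <= M k.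
Proof.
  intros H. unfold Sw, M. apply RInt_le. apply Rlt_le, PI_RGT_0. apply ex_sinp. apply ex_M.
  intros t _. rewrite sin_pow_cos. eapply Rle_trans. apply pt_lower. apply cos2_bound.
  apply exp_le_mono. assert (T := cos2_bound t). nra.
Qed.

Lemma M_upper k m n : INR m <= 2 * k -> (2 * n <= m)%nat ->
  M k <= Sw (2 * m) + 2 * INR m * (Sw (2 * n) - 2 * Sw (2 * n + 2) + Sw (2 * n + 4))
         + PI * exp (- (INR m / 2)).
Proof.
  intros H Hn. unfold M.
  eapply Rle_trans.
  apply (RInt_le _ (fun t => sin t ^ (2 * m) + (2 * INR m * (sin t ^ (2 * n) - 2 * sin t ^ (2 * n + 2) + sin t ^ (2 * n + 4))
     + exp (- (INR m / 2))))).
  apply Rlt_le, PI_RGT_0. apply ex_M. apply exRI. intros. auto_derive. auto.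
  intros t _.
  assert (T := cos2_bound t).
  eapply Rle_trans. apply exp_le_mono with (y := - (INR m * cos t ^ 2)). nra.
  eapply Rle_trans. apply (pt_upper _ m n T Hn).
  rewrite sin_pow_cos.
  replace (2 * n + 2)%nat with (2 * (n + 1))%nat by lia.
  replace (2 * n + 4)%nat with (2 * (n + 2))%nat by lia.
  rewrite !sin_pow_cos. 
  replace (n + 2)%nat with (S (S n)) by lia. replace (n+1)%nat with (S n) by lia.
  simpl pow. right. ring.
  assert (EX : forall a b, ex_RInt (fun t => 2 * INR m * (sin t ^ (2 * n) - 2 * sin t ^ (2 * n + 2) + sin t ^ (2 * n + 4))) a b).
  { intros. apply exRI. intros. auto_derive. auto. }
  rewrite RInt_plusR. rewrite RInt_plusR. rewrite RInt_constR. rewrite RInt_scalR.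
  rewrite (RInt_extR (fun t => sin t ^ (2 * n) - 2 * sin t ^ (2 * n + 2) + sin t ^ (2 * n + 4))
     (fun t => sin t ^ (2 * n) + (- 2 * sin t ^ (2 * n + 2) + 1 * sin t ^ (2 * n + 4)))).
  rewrite RInt_plusR. rewrite RInt_lin.
  unfold Sw. right.
  set (A1 := RInt (fun t : R => sin t ^ (2 * m)) 0 PI).
  set (A2 := RInt (fun t : R => sin t ^ (2 * n)) 0 PI).
  set (A3 := RInt (fun t : R => sin t ^ (2 * n + 2)) 0 PI).
  set (A4 := RInt (fun t : R => sin t ^ (2 * n + 4)) 0 PI).
  ring.
  apply ex_sinp. apply ex_sinp. apply ex_sinp.
  apply exRI. intros. auto_derive. auto.
  intros. 
  set (A2 := sin x ^ (2 * n)). set (A3 := sin x ^ (2 * n + 2)). set (A4 := sin x ^ (2 * n + 4)). ring.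
  apply exRI. intros. auto_derive. auto.
  apply EX.
  apply exRI. intros. auto_derive. auto.
  apply ex_sinp.
  apply exRI. intros. auto_derive. auto.
Qed.

Ltac pos := repeat (first [lra | apply Rmult_lt_0_compat | apply pow_lt | apply Rplus_lt_0_compat]); try lra.

Lemma sq_le a b : 0 <= b -> a ^ 2 <= b ^ 2 -> a <= b.
Proof. intros. nra. Qed.

Lemma Sw_comb n : Sw (2 * n) - 2 * Sw (2 * n + 2) + Sw (2 * n + 4) =
  3 * Sw (2 * n) / ((2 * INR n + 2) * (2 * INR n + 4)).
Proof.
  assert (H1 := S_rec (2 * n)). assert (H2 := S_rec (2 * n + 2)).
  replace (2 * n + 2 + 2)%nat with (2 * n + 4)%nat in H2 by lia.
  replace (2 * n + 2 + 1)%nat with (2 * n + 3)%nat in H2 by lia.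
  rewrite !plus_INR, !mult_INR in H1, H2. simpl INR in H1, H2.
  assert (0 <= INR n) by apply pos_INR.
  apply Rmult_eq_reg_r with ((2 * INR n + 2) * (2 * INR n + 4)); [|nra].
  unfold Rdiv. rewrite Rmult_assoc, Rinv_l by nra.
  set (a := Sw (2 * n)) in *. set (b := Sw (2 * n + 2)) in *. set (c := Sw (2 * n + 4)) in *.
  nra.
Qed.

Lemma nat_near (r : R) : 0 <= r -> exists m : nat, r < INR m <= r + 1.
Proof.
  intros Hr. destruct (archimed r) as [A B].
  assert (Hz : (0 <= up r)%Z). { apply le_IZR. simpl. lra. }
  exists (Z.to_nat (up r)). rewrite INR_IZR_INZ, Z2Nat.id by auto. lra.
Qed.

Lemma nat_near2 (r : R) : 0 <= r -> exists m : nat, r - 1 < INR m <= r.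
Proof.
  intros Hr. destruct (archimed r) as [A B].
  assert (Hz : (0 < up r)%Z). { apply lt_IZR. simpl. lra. }
  exists (Z.to_nat (up r - 1)). rewrite INR_IZR_INZ, Z2Nat.id by lia. rewrite minus_IZR. simpl. lra.
Qed.

Lemma exp_big k : 0 <= k -> (2 * k) ^ 4 / 24 <= exp (2 * k).
Proof.
  intros Hk. eapply Rle_trans; [|apply (exp_ge_taylor (2*k) 4); lra].
  simpl. unfold Rdiv. 
  assert (0 <= 2 * k) by lra. 
  simpl. nra.
Qed.

Lemma M_asym k : 40 <= k -> Rabs (M k - sqrt (PI / (2 * k))) <= 8 * sqrt (PI / (2 * k)) / k.
Proof.
  intros Hk.
  assert (HPI := PI_RGT_0). assert (HPI4 := PI_4).
  set (u := sqrt (PI / (2 * k))).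
  assert (Hu0 : 0 < u) by (apply sqrt_lt_R0; apply Rdiv_lt_0_compat; lra).
  assert (Hu2 : u ^ 2 = PI / (2 * k)) by (unfold u; rewrite pow2_sqrt; auto; apply Rlt_le, Rdiv_lt_0_compat; lra).
  destruct (nat_near (2 * k)) as [m [Hm1 Hm2]]; [lra|].
  assert (L1 := M_lower k m (Rlt_le _ _ Hm1)).
  assert (L2 := Sw_sq_lo (2 * m)).
  rewrite plus_INR, mult_INR in L2. simpl INR in L2.
  assert (L3 : u * (1 - 1 / k) <= Sw (2 * m)).
  { apply sq_le. apply Sw_ge0. eapply Rle_trans; [|exact L2].
    replace ((u * (1 - 1/k)) ^ 2) with (u ^ 2 * (1 - 1/k) ^ 2) by ring. rewrite Hu2.
    unfold Rdiv. apply Rmult_le_reg_r with (2 * k * (2 * INR m + 1)). nra.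
    field_simplify; try lra. 
    apply Rmult_le_reg_r with (k ^ 2). nra. field_simplify; try lra. assert (T : (k-1)^2 * (2*INR m+1) <= 4*k^3) by nra. assert (T2 : PI * ((k-1)^2 * (2*INR m+1)) <= PI * (4*k^3)) by (apply Rmult_le_compat_l; lra). nra. }
  destruct (nat_near2 (2 * k)) as [m' [Hm1' Hm2']]; [lra|].
  assert (Hex : exists n, (2 * n <= m')%nat /\ 2 * INR n <= INR m' <= 2 * INR n + 1).
  { destruct (Nat.Even_or_Odd m') as [[n Hn]|[n Hn]]; exists n; split; try lia;
    rewrite Hn; rewrite ?plus_INR, mult_INR; simpl INR; lra. }
  destruct Hex as [n [Hnm Hn']].
  assert (U1 := M_upper k m' n Hm2' Hnm).
  rewrite Sw_comb in U1.
  assert (HnR : 1 <= INR n) by lra.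
  assert (Hn1 : (1 <= n)%nat) by (apply INR_le; simpl; lra).
  assert (Hm'1 : (1 <= m')%nat) by (apply INR_le; simpl; lra).
  assert (A1 : Sw (2 * m') <= u * (1 + 1 / k)).
  { apply sq_le. assert (0 < 1/k) by (apply Rdiv_lt_0_compat; lra). nra.
    eapply Rle_trans. apply Sw_sq_hi; lia.
    replace ((u * (1 + 1/k)) ^ 2) with (u ^ 2 * (1 + 1/k) ^ 2) by ring. rewrite Hu2.
    rewrite mult_INR; simpl INR.
    apply Rmult_le_reg_r with (2 * INR m' * (2 * k) * k ^ 2). pos.
    field_simplify; try lra.
    assert (T : 4 * k^3 <= 2 * INR m' * (k+1)^2) by nra.
    assert (T2 : PI * (4 * k^3) <= PI * (2 * INR m' * (k+1)^2)) by (apply Rmult_le_compat_l; lra).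
    nra. }
  assert (A2 : Sw (2 * n) <= 2 * u).
  { apply sq_le. nra.
    eapply Rle_trans. apply Sw_sq_hi; lia.
    replace ((2 * u) ^ 2) with (4 * u ^ 2) by ring. rewrite Hu2.
    rewrite mult_INR; simpl INR.
    apply Rmult_le_reg_r with (2 * INR n * (2 * k)). pos.
    field_simplify; try lra.
    assert (k <= 2 * INR n) by lra. nra. }
  assert (A3 : 2 * INR m' * (3 * Sw (2 * n) / ((2 * INR n + 2) * (2 * INR n + 4))) <= 6 * u / k).
  { assert (0 <= Sw (2 * n)) by apply Sw_ge0.
    apply Rmult_le_reg_r with (k * ((2 * INR n + 2) * (2 * INR n + 4))). pos.
    field_simplify; try nra.
    assert (T1 : k <= INR n + 1) by lra.
    assert (T2 : INR m' * Sw (2 * n) <= 2 * k * (2 * u)) by (apply Rmult_le_compat; lra).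
    assert (T3 : k * k <= (INR n + 1) * (INR n + 2)) by nra.
    assert (T4 : u * (k * k) <= u * ((INR n + 1) * (INR n + 2))) by (apply Rmult_le_compat_l; lra).
    nra. }
  assert (A4 : PI * exp (- (INR m' / 2)) <= u / k).
  { apply sq_le. apply Rlt_le, Rdiv_lt_0_compat; lra.
    assert (E1 : exp (- (INR m' / 2)) <= exp (1/2 - k)) by (apply exp_le_mono; lra).
    assert (E2 : exp (1/2 - k) ^ 2 * exp (2 * k) = exp 1) by (replace (exp (1/2-k)^2) with (exp(1/2-k)*exp(1/2-k)) by ring; rewrite <- !exp_plus; f_equal; field).
    assert (E3 := exp_big k ltac:(lra)).
    assert (E4 := exp_le_3).
    assert (E5 : 0 < exp (- (INR m' / 2))) by apply exp_pos.
    assert (E6 : 0 < exp (2 * k)) by apply exp_pos.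
    replace ((u / k) ^ 2) with (u ^ 2 / k ^ 2) by (field; lra). rewrite Hu2.
    assert (E7 : (PI * exp (- (INR m' / 2))) ^ 2 <= PI ^ 2 * exp (1/2 - k) ^ 2).
    { replace ((PI * exp (- (INR m' / 2))) ^ 2) with (PI ^ 2 * exp (- (INR m' / 2)) ^ 2) by ring.
       apply Rmult_le_compat_l. nra. apply pow_incr; split; lra. }
    eapply Rle_trans. exact E7.
    apply Rmult_le_reg_r with (exp (2 * k) * (2 * k * k ^ 2)). pos.
    replace (PI ^ 2 * exp (1 / 2 - k) ^ 2 * (exp (2 * k) * (2 * k * k ^ 2))) with (PI ^ 2 * (exp (1 / 2 - k) ^ 2 * exp (2 * k)) * (2 * k * k ^ 2)) by ring.
    rewrite E2.
    replace (PI / (2 * k) / k ^ 2 * (exp (2 * k) * (2 * k * k ^ 2))) with (PI * exp (2 * k)) by (field; lra).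
    assert (F0 : 0 < exp 1) by apply exp_pos.
    assert (F1 : PI * exp 1 <= 12) by nra.
    assert (F2 : PI * exp 1 * (2 * k * k ^ 2) <= 24 * k ^ 3) by (assert (0 < 2 * k * k^2) by pos; nra).
    assert (F3 : 24 * k ^ 3 <= (2 * k) ^ 4 / 24) by nra.
    replace (PI ^ 2 * exp 1 * (2 * k * k ^ 2)) with (PI * (PI * exp 1 * (2 * k * k ^ 2))) by ring.
    apply Rmult_le_compat_l; lra. }
  assert (0 < 1 / k) by (apply Rdiv_lt_0_compat; lra).
  apply Rabs_le; split.
  - assert (u * (1 - 1/k) >= u - 8 * u / k) by (unfold Rdiv in *; nra). lra.
  - assert (u * (1 + 1/k) + 6 * u / k + u / k <= u + 8 * u / k) by (unfold Rdiv in *; nra). lra.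
Qed.

Definition Jf (k : R) := RInt (fun u => exp (- (k * (1 + cos u)))) 0 (2 * PI).

Lemma ex_Jf k a b : ex_RInt (fun u => exp (- (k * (1 + cos u)))) a b.
Proof. apply exRI. intros; auto_derive; auto. Qed.

Lemma J_M k : Jf k = 2 * M k.
Proof.
  unfold Jf, M.
  assert (H := RInt_comp_lin (V:=R_CompleteNormedModule) (fun u => exp (- (k * (1 + cos u)))) 2 0 0 PI (ex_Jf _ _ _)).
  replace (2 * 0 + 0) with 0 in H by ring. replace (2 * PI + 0) with (2 * PI) in H by ring.
  rewrite <- H.
  rewrite <- RInt_scalR by apply ex_M.
  apply RInt_extR. intros x _. unfold scal; simpl; unfold mult; simpl.
  f_equal. f_equal. replace (2 * x + 0) with (2 * x) by ring. rewrite cos_2a_cos. ring.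
Qed.

Lemma RInt_shift (h : R -> R) c : (forall a b, ex_RInt h a b) -> (forall x, h (x + 2 * PI) = h x) ->
  RInt (fun u => h (u + c)) 0 (2 * PI) = RInt h 0 (2 * PI).
Proof.
  intros Hex Hp.
  assert (H := RInt_comp_lin (V:=R_CompleteNormedModule) h 1 c 0 (2 * PI) (Hex _ _)).
  replace (1 * 0 + c) with c in H by ring. replace (1 * (2 * PI) + c) with (2 * PI + c) in H by ring.
  transitivity (RInt h c (2 * PI + c)).
  { rewrite <- H. apply RInt_extR. intros. unfold scal; simpl; unfold mult; simpl. f_equal. ring_simplify. f_equal. ring. }
  assert (H2 := RInt_comp_lin (V:=R_CompleteNormedModule) h 1 (2 * PI) 0 c (Hex _ _)).
  replace (1 * 0 + 2 * PI) with (2 * PI) in H2 by ring. replace (1 * c + 2 * PI) with (2 * PI + c) in H2 by ring.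
  assert (E : RInt h (2 * PI) (2 * PI + c) = RInt h 0 c).
  { rewrite <- H2. apply RInt_extR. intros. unfold scal; simpl; unfold mult; simpl. rewrite Rmult_1_l.
    replace (1 * x + 2 * PI) with (x + 2 * PI) by ring. apply Hp. }
  rewrite <- (RInt_Chasles (V:=R_CompleteNormedModule) h c (2 * PI) (2 * PI + c)) by apply Hex.
  rewrite E.
  rewrite <- (RInt_Chasles (V:=R_CompleteNormedModule) h 0 c (2 * PI)) by apply Hex.
  unfold plus; simpl. ring.
Qed.

Lemma polar a b : exists phi, a = sqrt (a ^ 2 + b ^ 2) * cos phi /\ b = sqrt (a ^ 2 + b ^ 2) * sin phi.
Proof.
  set (K := sqrt (a ^ 2 + b ^ 2)).
  assert (HK0 : 0 <= K) by apply sqrt_pos.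
  assert (HK2 : K ^ 2 = a ^ 2 + b ^ 2) by (unfold K; rewrite pow2_sqrt; nra).
  destruct (Req_dec K 0) as [Z|NZ].
  - exists 0. rewrite Z in HK2. assert (a = 0) by nra. assert (b = 0) by nra. subst. rewrite Z. split; ring.
  - assert (HKp : 0 < K) by lra.
    assert (Hc : -1 <= a / K <= 1).
    { assert ((a / K) ^ 2 <= 1). { replace ((a/K)^2) with (a^2 / K^2) by (field; lra). 
        apply Rmult_le_reg_r with (K^2). pos. unfold Rdiv. rewrite Rmult_assoc, Rinv_l by nra. nra. }
      nra. }
    assert (Hs : sqrt (1 - (a / K)²) = Rabs b / K).
    { replace (1 - (a / K)²) with ((Rabs b / K) ^ 2).
      rewrite sqrt_pow2. auto. apply Rmult_le_pos. apply Rabs_pos. apply Rlt_le, Rinv_0_lt_compat; auto.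
      unfold Rsqr. replace ((Rabs b / K) ^ 2) with (Rabs b ^ 2 / K ^ 2) by (field; lra).
      rewrite pow2_abs. replace (a / K * (a / K)) with (a ^ 2 / K ^ 2) by (field; lra). rewrite HK2. field. nra. }
    destruct (Rle_dec 0 b).
    + exists (acos (a / K)). rewrite cos_acos, sin_acos by auto. rewrite Hs. rewrite Rabs_right by lra. split; field; lra.
    + exists (- acos (a / K)). rewrite cos_neg, sin_neg, cos_acos, sin_acos by auto. rewrite Hs. rewrite Rabs_left by lra. split; field; lra.
Qed.

Lemma cos_shift t2 t1 phi : cos (t2 + (phi - t1 + PI)) =
  - ((cos t2 * cos t1 + sin t2 * sin t1) * cos phi - (sin t2 * cos t1 - cos t2 * sin t1) * sin phi).
Proof.
  replace (t2 + (phi - t1 + PI)) with ((t2 - t1) + phi + PI) by ring.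
  rewrite neg_cos, cos_plus, cos_minus, sin_minus. ring.
Qed.

Lemma alg_q k11 k22 K r1 r2 c1 s1 c2 s2 cf sf D :
  c1 ^ 2 + s1 ^ 2 = 1 -> c2 ^ 2 + s2 ^ 2 = 1 -> D <> 0 ->
  - ((k22 * ((r1 * c1) ^ 2 + (r1 * s1) ^ 2) + k11 * ((r2 * c2) ^ 2 + (r2 * s2) ^ 2) -
      2 * ((K * cf) * ((r1 * c1) * (r2 * c2) + (r1 * s1) * (r2 * s2)) - (K * sf) * ((r1 * c1) * (r2 * s2) - (r1 * s1) * (r2 * c2)))) / D)
  = - ((k22 * r1 ^ 2 + k11 * r2 ^ 2 - 2 * K * r1 * r2) / D) +
    - (2 * r1 * r2 * K / D * (1 + - ((c2 * c1 + s2 * s1) * cf - (s2 * c1 - c2 * s1) * sf))).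
Proof.
  intros H1 H2 HD.
  replace ((r1 * c1) ^ 2 + (r1 * s1) ^ 2) with (r1 ^ 2 * (c1 ^ 2 + s1 ^ 2)) by ring.
  replace ((r2 * c2) ^ 2 + (r2 * s2) ^ 2) with (r2 ^ 2 * (c2 ^ 2 + s2 ^ 2)) by ring.
  rewrite H1, H2. field. auto.
Qed.

Lemma cos_per x : cos (x + 2 * PI) = cos x.
Proof. rewrite cos_plus, cos_2PI, sin_2PI. ring. Qed.

Lemma env_reduce k11 k22 kr ki r1 r2 :
  k11 * k22 - (kr ^ 2 + ki ^ 2) <> 0 ->
  envelope_density k11 k22 kr ki r1 r2 =
  r1 * r2 * (2 * PI) * (exp (- ((k22 * r1 ^ 2 + k11 * r2 ^ 2 - 2 * sqrt (kr ^ 2 + ki ^ 2) * r1 * r2) / (k11 * k22 - (kr ^ 2 + ki ^ 2))))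
     / (PI ^ 2 * (k11 * k22 - (kr ^ 2 + ki ^ 2))))
   * Jf (2 * r1 * r2 * sqrt (kr ^ 2 + ki ^ 2) / (k11 * k22 - (kr ^ 2 + ki ^ 2))).
Proof.
  intros HD.
  destruct (polar kr ki) as [phi [Hr Hi]].
  set (K := sqrt (kr ^ 2 + ki ^ 2)) in *.
  set (D := k11 * k22 - (kr ^ 2 + ki ^ 2)) in *.
  set (Cst := exp (- ((k22 * r1 ^ 2 + k11 * r2 ^ 2 - 2 * K * r1 * r2) / D)) / (PI ^ 2 * D)).
  set (kap := 2 * r1 * r2 * K / D).
  unfold envelope_density.
  rewrite (RInt_extR (fun t1 => RInt (fun t2 => cscg2_density k11 k22 kr ki (r1 * cos t1) (r1 * sin t1) (r2 * cos t2) (r2 * sin t2)) 0 (2*PI)) (fun _ => Cst * Jf kap)).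
  { rewrite RInt_constR. ring. }
  intros t1 _.
  rewrite (RInt_extR (fun t2 => cscg2_density k11 k22 kr ki (r1 * cos t1) (r1 * sin t1) (r2 * cos t2) (r2 * sin t2)) (fun t2 => Cst * (fun u => exp (- (kap * (1 + cos u)))) (t2 + (phi - t1 + PI)))).
  { rewrite RInt_scalR. unfold Jf. rewrite (RInt_shift (fun u => exp (- (kap * (1 + cos u)))) (phi - t1 + PI)). auto.
    apply ex_Jf. intros; rewrite cos_per; auto.
    apply exRI. intros; auto_derive; auto. }
  intros t2 _.
  unfold cscg2_density. cbv zeta.
  fold D.
  match goal with |- exp ?x / _ = _ =>
    assert (Q : x = - ((k22 * r1 ^ 2 + k11 * r2 ^ 2 - 2 * K * r1 * r2) / D) + - (kap * (1 + cos (t2 + (phi - t1 + PI))))) end.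
  { rewrite cos_shift. unfold kap.
    rewrite Hr, Hi.
    assert (P1 := sin2_cos2 t1). assert (P2 := sin2_cos2 t2). unfold Rsqr in P1, P2.
    rewrite alg_q; auto; try (simpl; lra). }
  rewrite Q, exp_plus. unfold Cst. unfold Rdiv. ring.
Qed.

Lemma D_pos p s b a2 : 0 < p -> 0 < s -> 0 < b -> 0 <= a2 < 1 ->
  0 < (p + s) * (p + b * s) - p ^ 2 * a2.
Proof. intros. assert (0 < p^2*(1-a2)) by (apply Rmult_lt_0_compat; [apply pow_lt|]; lra). assert (0 < p*s) by pos. assert (0 < p*(b*s)) by pos. assert (0 < b*s*s) by pos. nra. Qed.

Lemma f_formula p rr ri s b r1 r2 : 0 < p -> 0 < s -> 0 < b -> rr ^ 2 + ri ^ 2 < 1 ->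
  f_RX_RE p rr ri s (b * s) r1 r2 =
  r1 * r2 * (2 * PI) *
  (exp (- (((p + b * s) * r1 ^ 2 + (p + s) * r2 ^ 2 - 2 * (p * sqrt (rr ^ 2 + ri ^ 2)) * r1 * r2)
           / ((p + s) * (p + b * s) - p ^ 2 * (rr ^ 2 + ri ^ 2))))
   / (PI ^ 2 * ((p + s) * (p + b * s) - p ^ 2 * (rr ^ 2 + ri ^ 2))))
  * Jf (2 * r1 * r2 * (p * sqrt (rr ^ 2 + ri ^ 2)) / ((p + s) * (p + b * s) - p ^ 2 * (rr ^ 2 + ri ^ 2))).
Proof.
  intros Hp Hs Hb Ha.
  assert (E1 : (p * rr) ^ 2 + (p * ri) ^ 2 = p ^ 2 * (rr ^ 2 + ri ^ 2)) by ring.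
  assert (E2 : sqrt ((p * rr) ^ 2 + (p * ri) ^ 2) = p * sqrt (rr ^ 2 + ri ^ 2)).
  { rewrite E1, sqrt_mult_alt, sqrt_pow2; auto; try lra. apply pow2_ge_0. }
  assert (HD := D_pos p s b (rr^2+ri^2) Hp Hs Hb ltac:(split; [nra|lra])).
  unfold f_RX_RE. rewrite env_reduce.
  - rewrite E2, E1. ring_simplify (b * s + p). replace (s + p) with (p + s) by ring. reflexivity.
  - rewrite E1. lra.
Qed.

Lemma exp_le1 x : 0 <= x -> exp (- x) <= 1.
Proof. intros. rewrite <- exp_0. apply exp_le_mono. lra. Qed.

Lemma exp_inv1 y : 0 < y -> exp (- y) <= 1 / y.
Proof.
  intros. rewrite exp_Ropp. assert (H1 := exp_ineq1_le y). 
  unfold Rdiv. rewrite Rmult_1_l. apply Rinv_le_contravar; lra.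
Qed.

Lemma exp_inv2 y : 0 < y -> exp (- y) <= 2 / y ^ 2.
Proof.
  intros. rewrite exp_Ropp.
  assert (H1 : y ^ 2 / 2 <= exp y).
  { eapply Rle_trans; [|apply (exp_ge_taylor y 2); lra]. simpl. nra. }
  replace (2 / y ^ 2) with (/ (y ^ 2 / 2)) by (field; lra).
  apply Rinv_le_contravar. pos. auto.
Qed.

Lemma exp_diff x y : 0 <= x -> 0 <= y -> Rabs (exp (- x) - exp (- y)) <= Rabs (x - y).
Proof.
  assert (G : forall x y, 0 <= x <= y -> exp (- x) - exp (- y) <= y - x).
  { intros x0 y0 [H0 H1]. replace (- y0) with (- x0 + - (y0 - x0)) by ring. rewrite exp_plus.
    assert (exp (- x0) <= 1) by (apply exp_le1; lra).
    assert (1 - (y0 - x0) <= exp (- (y0 - x0))) by (assert (T:= exp_ineq1_le (- (y0 - x0))); lra).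
    assert (0 < exp (- x0)) by apply exp_pos.
    nra. }
  intros Hx Hy. destruct (Rle_dec x y).
  - assert (exp (- y) <= exp (- x)) by (apply exp_le_mono; lra).
    rewrite Rabs_right by lra. rewrite Rabs_left1 by lra. assert (T := G x y ltac:(lra)). lra.
  - assert (exp (- x) <= exp (- y)) by (apply exp_le_mono; lra).
    rewrite Rabs_left1 by lra. rewrite Rabs_right by lra. assert (T := G y x ltac:(lra)). lra.
Qed.

Lemma Jf_bounds k : 0 <= k -> 0 <= Jf k <= 2 * PI.
Proof.
  intros Hk. assert (HPI := PI_RGT_0). unfold Jf. split.
  - apply RInt_ge_0. lra. apply ex_Jf. intros. apply Rlt_le, exp_pos.
  - assert (E : @RInt R_CompleteNormedModule (fun _ => 1) 0 (2 * PI) = 2 * PI) . { rewrite RInt_constR. change (@eq R ((2 * PI - 0) * 1) (2 * PI)). ring. }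
    rewrite <- E at 2.
    apply RInt_le. lra. apply ex_Jf. apply exRI. intros; auto_derive; auto.
    intros. apply exp_le1. assert (T := COS_bound x). nra.
Qed.

Lemma sqrt_bound A c t : 0 <= A -> 0 <= c -> 0 <= t -> A ^ 2 <= c ^ 2 * t -> A <= c * sqrt t.
Proof.
  intros. apply sq_le. assert (0 <= sqrt t) by apply sqrt_pos. nra.
  replace ((c * sqrt t) ^ 2) with (c ^ 2 * (sqrt t) ^ 2) by ring. rewrite pow2_sqrt; auto.
Qed.

Lemma le_sqrt_self t : 0 <= t <= 1 -> t <= sqrt t.
Proof.
  intros. apply sq_le. apply sqrt_pos. rewrite pow2_sqrt by lra. nra.
Qed.

Lemma a_facts a2 : 0 <= a2 < 1 -> 0 <= sqrt a2 <= 1 /\ a2 <= sqrt a2 /\ sqrt a2 ^ 2 = a2.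
Proof.
  intros H. assert (E : sqrt a2 ^ 2 = a2) by (apply pow2_sqrt; lra).
  assert (0 <= sqrt a2) by apply sqrt_pos.
  assert (sqrt a2 <= 1) by (apply sq_le; [lra| rewrite E; lra]).
  split; [lra|split; [nra|auto]].
Qed.

Lemma asym_neq p b r1 r2 : 0 < p -> 0 < b -> 0 < r1 -> 0 < r2 -> r1 <> r2 ->
  envelope_asymptotic p b r1 r2.
Proof.
  intros Hp Hb H1 H2 Hne.
  assert (HPI := PI_RGT_0). assert (HPI1 : 1 <= PI) by (assert (T:=PI2_1); lra).
  set (d := Rabs (r1 - r2) / 2).
  assert (Hd : 0 < d) by (unfold d; assert (0 < Rabs (r1 - r2)) by (apply Rabs_pos_lt; lra); lra).
  assert (Hdef : 2 * d = Rabs (r1 - r2)) by (unfold d; field).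
  clearbody d.
  set (cmax := p + 1 + b).
  set (CD := p * cmax + b).
  set (C1 := r1 * r2 * CD / (2 * p ^ 2 * d ^ 4)).
  set (C2 := 2 * r2 * sqrt cmax / (p * d ^ 2)).
  assert (HC1 : 0 <= C1) by (unfold C1, CD, cmax; apply Rlt_le, Rdiv_lt_0_compat; pos).
  assert (HC2 : 0 <= C2) by (unfold C2; apply Rmult_le_pos; [apply Rmult_le_pos; [lra|apply sqrt_pos]| apply Rlt_le, Rinv_0_lt_compat; pos]).
  exists (C1 + C2), (Rmin (1/2) (d / r2)).
  split. { apply Rmin_pos. lra. apply Rdiv_lt_0_compat; lra. }
  intros rr ri s Ha Hs Ht. unfold rho_abs2 in *.
  set (a2 := rr ^ 2 + ri ^ 2) in *.
  set (t := 1 - a2 + s) in *.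
  assert (Ha0 : 0 <= a2) by (unfold a2; nra).
  assert (Ht0 : 0 < t) by (unfold t; lra).
  assert (Hst : s < t) by (unfold t; lra).
  assert (Hat : 1 - a2 < t) by (unfold t; lra).
  assert (Ht1 : t < 1/2) by (eapply Rlt_le_trans; [exact Ht| apply Rmin_l]).
  assert (Ht2 : t < d / r2) by (eapply Rlt_le_trans; [exact Ht| apply Rmin_r]).
  destruct (a_facts a2 (conj Ha0 Ha)) as [[Ha1 Ha2] [Ha3 Ha4]].
  set (a := sqrt a2) in *.
  rewrite f_formula by auto. fold a2. fold a.
  unfold approx_density, rho_abs2. cbv zeta. fold a2. fold a.
  set (D := (p + s) * (p + b * s) - p ^ 2 * a2).
  assert (HD : 0 < D) by (apply D_pos; auto).
  assert (HDt : D <= CD * t).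
  { assert (Hs1 : s < 1) by (unfold t in Ht1; lra). unfold D, CD, cmax, t.
    assert (T1 : p^2 * (1 - a2) <= p^2 * (1 - a2 + s)) by (assert (0 < p^2 * s) by pos; nra).
    assert (T2 : p * s * (1 + b) <= p * (1 + b) * (1 - a2 + s)) by (assert (0 < p * (1+b)) by pos; nra).
    assert (T3 : b * s * s <= b * (1 - a2 + s)) by (assert (0 < b * s) by pos; nra).
    nra. }
  set (Q := (p + b * s) * r1 ^ 2 + (p + s) * r2 ^ 2 - 2 * (p * a) * r1 * r2).
  assert (HQ : p * (2 * d) ^ 2 <= Q).
  { unfold Q. rewrite Hdef, pow2_abs.
    assert (p * a * r1 * r2 <= p * r1 * r2) by (assert (0 < p * r1 * r2) by pos; nra).
    assert (0 <= b * s * r1 ^ 2) by (apply Rlt_le; pos). assert (0 <= s * r2 ^ 2) by (apply Rlt_le; pos). nra. }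
  set (kap := 2 * r1 * r2 * (p * a) / D).
  assert (Hkap : 0 <= kap) by (unfold kap; apply Rmult_le_pos; [apply Rmult_le_pos; [apply Rlt_le; pos| nra]| apply Rlt_le, Rinv_0_lt_compat; auto]).
  destruct (Jf_bounds kap Hkap) as [J0 J1].
  set (V := p * (1 - a2) + s + b * s).
  assert (HV : 0 < V) by (unfold V; assert (0 < b*s) by pos; nra).
  assert (HVt : V <= cmax * t) by (unfold V, cmax, t; assert (0 < b*s) by pos; nra).
  set (f := r1 * r2 * (2 * PI) * (exp (- (Q / D)) / (PI ^ 2 * D)) * Jf kap).
  assert (Hf0 : 0 <= f).
  { unfold f. apply Rmult_le_pos; auto. apply Rmult_le_pos. apply Rlt_le; pos.
    apply Rlt_le, Rdiv_lt_0_compat. apply exp_pos. pos. }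
  assert (Hf1 : f <= C1 * sqrt t).
  { assert (E1 : exp (- (Q / D)) <= 2 / (p * (2 * d) ^ 2 / D) ^ 2).
    { eapply Rle_trans. apply exp_le_mono with (y := - (p * (2 * d) ^ 2 / D)).
      apply Ropp_le_contravar. unfold Rdiv. apply Rmult_le_compat_r. apply Rlt_le, Rinv_0_lt_compat; auto. auto.
      apply exp_inv2. apply Rdiv_lt_0_compat; pos. }
    assert (E2 : f <= 4 * r1 * r2 * exp (- (Q / D)) / D).
    { unfold f. unfold Rdiv. assert (0 < exp (- (Q * / D))) by apply exp_pos.
      apply Rle_trans with (r1 * r2 * (2 * PI) * (exp (- (Q * / D)) * / (PI ^ 2 * D)) * (2 * PI)).
      apply Rmult_le_compat_l; auto. apply Rmult_le_pos. apply Rlt_le; pos. apply Rlt_le, Rmult_lt_0_compat; auto. apply Rinv_0_lt_compat; pos.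
      right. field. split; lra. }
    assert (E3 : 4 * r1 * r2 * exp (- (Q / D)) / D <= C1 * t).
    { eapply Rle_trans. unfold Rdiv. apply Rmult_le_compat_r. apply Rlt_le, Rinv_0_lt_compat; auto.
      apply Rmult_le_compat_l. apply Rlt_le; pos. exact E1.
      replace (4 * r1 * r2 * (2 / (p * (2 * d) ^ 2 / D) ^ 2) * / D) with (r1 * r2 * / (2 * p ^ 2 * d ^ 4) * D) by (field; split; lra).
      apply Rle_trans with (r1 * r2 * / (2 * p ^ 2 * d ^ 4) * (CD * t)).
      apply Rmult_le_compat_l; [apply Rlt_le; apply Rmult_lt_0_compat; [pos| apply Rinv_0_lt_compat; pos] | auto].
      unfold C1; right; unfold Rdiv; ring. }
    assert (t <= sqrt t) by (apply le_sqrt_self; lra).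
    assert (C1 * t <= C1 * sqrt t) by (apply Rmult_le_compat_l; auto).
    lra. }
  set (g := 2 * r2 * exp (- r2 ^ 2 / p) / p * (exp (- (r1 - a * r2) ^ 2 / V) / sqrt (PI * V))).
  assert (HsV : 0 < sqrt (PI * V)) by (apply sqrt_lt_R0; pos).
  assert (Hg0 : 0 <= g).
  { unfold g. apply Rmult_le_pos. apply Rmult_le_pos. apply Rmult_le_pos. lra. apply Rlt_le, exp_pos.
    apply Rlt_le, Rinv_0_lt_compat; lra. apply Rlt_le, Rdiv_lt_0_compat; auto; apply exp_pos. }
  assert (Hg1 : g <= C2 * sqrt t).
  { assert (Hra : d ^ 2 <= (r1 - a * r2) ^ 2).
    { assert (T1 : (1 - a) * r2 < d) by (assert ((1 - a) * r2 <= t * r2) by (apply Rmult_le_compat_r; lra);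
         assert (t * r2 < d) by (apply (Rmult_lt_compat_r r2) in Ht2; [|lra]; unfold Rdiv in Ht2; rewrite Rmult_assoc, Rinv_l, Rmult_1_r in Ht2 by lra; lra); lra).
      assert (T2 : 2 * d = Rabs (r1 - r2)) by exact Hdef.
      assert (T3 : d <= Rabs (r1 - a * r2)).
      { assert (Rabs (r1 - r2) <= Rabs (r1 - a * r2) + Rabs ((1 - a) * r2)).
        { replace (r1 - r2) with ((r1 - a * r2) + (- ((1 - a) * r2))) by ring.
          eapply Rle_trans. apply Rabs_triang. rewrite Rabs_Ropp. lra. }
        rewrite (Rabs_right ((1 - a) * r2)) in H by (apply Rle_ge, Rmult_le_pos; lra). lra. }
      rewrite <- (pow2_abs (r1 - a * r2)). apply pow_incr. lra. }
    assert (Eg1 : exp (- (r1 - a * r2) ^ 2 / V) <= V / d ^ 2).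
    { unfold Rdiv at 1. replace (- (r1 - a * r2) ^ 2 * / V) with (- ((r1 - a * r2) ^ 2 / V)) by (field; lra).
      eapply Rle_trans. apply exp_le_mono with (y := - (d ^ 2 / V)).
      apply Ropp_le_contravar. unfold Rdiv. apply Rmult_le_compat_r. apply Rlt_le, Rinv_0_lt_compat; auto. auto.
      eapply Rle_trans. apply exp_inv1. apply Rdiv_lt_0_compat; pos. right. field. split; lra. }
    assert (Eg2 : exp (- r2 ^ 2 / p) <= 1).
    { unfold Rdiv. replace (- r2 ^ 2 * / p) with (- (r2 ^ 2 / p)) by (field; lra). apply exp_le1. apply Rlt_le, Rdiv_lt_0_compat; pos. }
    assert (EsV : sqrt (PI * V) >= sqrt V) by (apply Rle_ge, sqrt_le_1_alt; nra).
    assert (EV : V = sqrt V ^ 2) by (rewrite pow2_sqrt; lra).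
    assert (HsV' : 0 < sqrt V) by (apply sqrt_lt_R0; auto).
    assert (Eg3 : exp (- (r1 - a * r2) ^ 2 / V) / sqrt (PI * V) <= sqrt V / d ^ 2).
    { unfold Rdiv at 1. eapply Rle_trans. apply Rmult_le_compat_r. apply Rlt_le, Rinv_0_lt_compat; auto. exact Eg1.
      apply Rle_trans with (V / d ^ 2 * / sqrt V).
      apply Rmult_le_compat_l. apply Rlt_le, Rdiv_lt_0_compat; pos. apply Rinv_le_contravar; lra.
      rewrite EV at 1. right. field. split; lra. }
    assert (Eg4 : sqrt V <= sqrt cmax * sqrt t).
    { rewrite <- sqrt_mult_alt. apply sqrt_le_1_alt; auto. unfold cmax; lra. }
    assert (Eg5 : g <= 2 * r2 / p * (sqrt V / d ^ 2)).
    { unfold g. unfold Rdiv at 1 2. 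
      apply Rle_trans with (2 * r2 * 1 * / p * (exp (- (r1 - a * r2) ^ 2 / V) / sqrt (PI * V))).
      apply Rmult_le_compat_r. apply Rlt_le, Rdiv_lt_0_compat; auto; apply exp_pos.
      apply Rmult_le_compat_r. apply Rlt_le, Rinv_0_lt_compat; lra. apply Rmult_le_compat_l; lra.
      rewrite Rmult_1_r. apply Rmult_le_compat_l. apply Rlt_le, Rdiv_lt_0_compat; lra. auto. }
    eapply Rle_trans. exact Eg5. unfold C2.
    apply Rle_trans with (2 * r2 / p * (sqrt cmax * sqrt t / d ^ 2)).
    apply Rmult_le_compat_l. apply Rlt_le, Rdiv_lt_0_compat; lra. unfold Rdiv. apply Rmult_le_compat_r. apply Rlt_le, Rinv_0_lt_compat; pos. auto.
    right. field. split; lra. }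
  fold f g.
  assert (Rabs (f - g) <= f + g) by (apply Rabs_le; split; lra).
  lra.
Qed.

Lemma abs_sq_diff X Y : 0 <= X -> 0 < Y -> Rabs (X - Y) <= Rabs (X ^ 2 - Y ^ 2) / Y.
Proof.
  intros HX HY. replace (X ^ 2 - Y ^ 2) with ((X - Y) * (X + Y)) by ring.
  rewrite Rabs_mult. rewrite (Rabs_right (X + Y)) by lra.
  apply Rmult_le_reg_r with Y; auto. unfold Rdiv. rewrite Rmult_assoc, Rinv_l, Rmult_1_r by lra.
  assert (0 <= Rabs (X - Y)) by apply Rabs_pos. nra.
Qed.

Lemma div_le x y z : 0 < y -> x <= z * y -> x / y <= z.
Proof. intros. apply Rmult_le_reg_r with y; auto. unfold Rdiv. rewrite Rmult_assoc, Rinv_l, Rmult_1_r by lra. auto. Qed.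

Lemma div_nonneg x y : 0 <= x -> 0 < y -> 0 <= x / y.
Proof. intros. apply Rmult_le_pos; auto. apply Rlt_le, Rinv_0_lt_compat; auto. Qed.

Lemma asym_eq p b r : 0 < p -> 0 < b -> 0 < r -> envelope_asymptotic p b r r.
Proof.
  intros Hp Hb Hr.
  assert (HPI := PI_RGT_0). assert (HPI1 : 1 <= PI) by (assert (T:=PI2_1); lra).
  set (cmax := p + 1 + b).
  set (CD := p * cmax + b).
  set (cm := p * (1 + b) / cmax).
  assert (Hcm : 0 < cm) by (unfold cm, cmax; apply Rdiv_lt_0_compat; pos).
  set (crho := 2 + 2 * b / p).
  assert (Hcrho : 0 < crho) by (unfold crho; assert (0 < b / p) by (apply Rdiv_lt_0_compat; lra); lra).
  set (cE := r ^ 2 * (b / p + b / p ^ 2)).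
  assert (HcE : 0 < cE) by (unfold cE; apply Rmult_lt_0_compat; [pos|]; assert (0 < b / p) by (apply Rdiv_lt_0_compat; lra); assert (0 < b / p^2) by (apply Rdiv_lt_0_compat; pos); lra).
  assert (HCD : 0 < CD) by (unfold CD, cmax; pos).
  set (C3 := 8 * (1 + crho) * CD / (r ^ 2 * p) + crho + cE).
  assert (HC3 : 0 < C3) by (unfold C3; assert (0 < 8 * (1 + crho) * CD / (r ^ 2 * p)) by (apply Rdiv_lt_0_compat; pos); lra).
  set (Cy := 2 * r / (p * sqrt cm)).
  assert (HCy : 0 < Cy) by (unfold Cy; apply Rdiv_lt_0_compat; [lra| apply Rmult_lt_0_compat; [lra| apply sqrt_lt_R0; auto]]).
  exists (C3 * Cy), (Rmin (1/2) (r ^ 2 * p / (40 * CD))).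
  split. { apply Rmin_pos. lra. apply Rdiv_lt_0_compat; pos. }
  intros rr ri s Ha Hs Ht. unfold rho_abs2 in *.
  set (a2 := rr ^ 2 + ri ^ 2) in *.
  set (t := 1 - a2 + s) in *.
  assert (Ha0 : 0 <= a2) by (unfold a2; nra).
  assert (Ht0 : 0 < t) by (unfold t; lra).
  assert (Hst : s < t) by (unfold t; lra).
  assert (Hat : 1 - a2 < t) by (unfold t; lra).
  assert (Ht1 : t < 1/2) by (eapply Rlt_le_trans; [exact Ht| apply Rmin_l]).
  assert (Ht2 : t < r ^ 2 * p / (40 * CD)) by (eapply Rlt_le_trans; [exact Ht| apply Rmin_r]).
  destruct (a_facts a2 (conj Ha0 Ha)) as [[Ha1 Ha2] [Ha3 Ha4]].
  set (a := sqrt a2) in *.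
  assert (Hahalf : 1 / 2 < a) by lra.
  assert (Hta : 1 - a < t) by lra.
  rewrite f_formula by auto. fold a2. fold a.
  unfold approx_density, rho_abs2. cbv zeta. fold a2. fold a.
  assert (Htdef : t = 1 - a2 + s) by reflexivity.
  clearbody t a. clearbody a2. subst a2.
  set (D := (p + s) * (p + b * s) - p ^ 2 * a ^ 2).
  assert (HD : 0 < D) by (apply D_pos; auto; split; nra).
  set (V := p * (1 - a ^ 2) + s + b * s).
  assert (HDV : D = p * V + b * s ^ 2) by (unfold D, V; ring).
  assert (HV : 0 < V) by (unfold V; assert (0 < b*s) by pos; nra).
  assert (HVs : (1 + b) * s <= V) by (unfold V; nra).
  assert (Hcm1 : cm <= p) by (unfold cm, cmax; apply div_le; pos; nra).
  assert (Hcm2 : cm <= 1 + b) by (unfold cm, cmax; apply div_le; pos; nra).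
  assert (HVt : cm * t <= V).
  { unfold V. rewrite Htdef. assert (cm * (1 - a^2) <= p * (1 - a^2)) by (apply Rmult_le_compat_r; nra).
    assert (cm * s <= (1 + b) * s) by (apply Rmult_le_compat_r; lra). nra. }
  assert (HVt2 : V <= cmax * t) by (unfold V, cmax; rewrite Htdef; nra).
  assert (HDt : D <= CD * t).
  { rewrite HDV. unfold CD. assert (p * V <= p * (cmax * t)) by (apply Rmult_le_compat_l; lra).
    assert (b * s ^ 2 <= b * t) by (apply Rmult_le_compat_l; nra). nra. }
  set (kap := 2 * r * r * (p * a) / D).
  assert (Hkap : 40 <= kap).
  { unfold kap. apply Rmult_le_reg_r with D; auto. unfold Rdiv. rewrite Rmult_assoc, Rinv_l, Rmult_1_r by lra.
    assert (T1 : CD * t < r ^ 2 * p / 40).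
    { apply Rmult_lt_reg_l with (/ CD). apply Rinv_0_lt_compat; lra. 
      replace (/ CD * (CD * t)) with t by (field; lra). 
      replace (/ CD * (r ^ 2 * p / 40)) with (r ^ 2 * p / (40 * CD)) by (field; lra). auto. }
    assert (T2 : r ^ 2 * p <= 2 * r * r * (p * a)) by (assert (0 < r^2 * p) by pos; nra).
    lra. }
  rewrite J_M.
  assert (HM := M_asym kap Hkap).
  set (u := sqrt (PI / (2 * kap))) in *.
  assert (Hu0 : 0 < u) by (apply sqrt_lt_R0; apply Rdiv_lt_0_compat; lra).
  assert (Hu2 : u ^ 2 = PI / (2 * kap)) by (unfold u; rewrite pow2_sqrt; auto; apply Rlt_le, Rdiv_lt_0_compat; lra).
  clearbody u.
  set (E1 := ((p + b * s) * r ^ 2 + (p + s) * r ^ 2 - 2 * (p * a) * r * r) / D).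
  set (E2 := r ^ 2 / p + (r - a * r) ^ 2 / V).
  set (Z := 4 * r ^ 2 / (PI * D)).
  set (Y := 2 * r / (p * sqrt (PI * V))).
  assert (HsV : 0 < sqrt (PI * V)) by (apply sqrt_lt_R0; pos).
  assert (HsV2 : sqrt (PI * V) ^ 2 = PI * V) by (rewrite pow2_sqrt; pos; nra).
  assert (HZ : 0 < Z) by (unfold Z; apply Rdiv_lt_0_compat; pos).
  assert (HY : 0 < Y) by (unfold Y; apply Rdiv_lt_0_compat; pos).
  assert (Ef : r * r * (2 * PI) * (exp (- E1) / (PI ^ 2 * D)) * (2 * M kap) = exp (- E1) * Z * M kap)
    by (unfold Z; field; split; lra).
  rewrite Ef.
  assert (Eg : 2 * r * exp (- r ^ 2 / p) / p * (exp (- (r - a * r) ^ 2 / V) / sqrt (PI * V)) = Y * exp (- E2)).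
  { unfold Y, E2. replace (- (r ^ 2 / p + (r - a * r) ^ 2 / V)) with (- r ^ 2 / p + - (r - a * r) ^ 2 / V) by (field; lra).
    rewrite exp_plus. field. split; lra. }
  rewrite Eg.
  assert (Hpa : 0 < p * a) by pos.
  assert (HX2 : (Z * u) ^ 2 = 4 * r ^ 2 / (PI * D * (p * a))).
  { replace ((Z * u) ^ 2) with (Z ^ 2 * u ^ 2) by ring. rewrite Hu2. unfold Z, kap. field. repeat split; lra. }
  assert (HY2 : Y ^ 2 = 4 * r ^ 2 / (p ^ 2 * PI * V)).
  { unfold Y. replace ((2 * r / (p * sqrt (PI * V))) ^ 2) with (4 * r ^ 2 / (p ^ 2 * sqrt (PI * V) ^ 2)) by (field; split; lra).
    rewrite HsV2. field. repeat split; lra. }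
  assert (Hrho0 : Rabs (p ^ 2 * V - D * (p * a)) <= p * (p * V * (1 - a) + b * s ^ 2)).
  { rewrite HDV. apply Rabs_le. assert (0 <= p * V * (1 - a)) by (apply Rmult_le_pos; [apply Rlt_le; pos|lra]).
    assert (0 <= p * (b * s ^ 2) * (1 - a)) by (apply Rmult_le_pos; [apply Rlt_le; pos|lra]).
    assert (0 <= p * (p * V) * (1 - a)) by (apply Rmult_le_pos; [apply Rlt_le; pos|lra]).
    assert (0 < p * (b * s ^ 2)) by pos.
    split; nra. }
  assert (Hcp : crho * p = 2 * p + 2 * b) by (unfold crho; field; lra).
  assert (Hrho1 : p * (p * V * (1 - a) + b * s ^ 2) <= crho * t * (D * (p * a))).
  { assert (T1 : p * V * p / 2 <= D * (p * a)) by (rewrite HDV; assert (0 < b * s^2 * (p * a)) by pos; assert (0 < p * V * p) by pos; nra).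
    assert (T2 : p * V * (1 - a) <= p * V * t) by (apply Rmult_le_compat_l; [apply Rlt_le; pos|lra]).
    assert (T3 : s ^ 2 <= t * V) by (assert (s <= V) by nra; assert (s * s <= t * s) by (apply Rmult_le_compat_r; lra); assert (t * s <= t * V) by (apply Rmult_le_compat_l; lra); simpl; lra).
    assert (T4 : crho * t * (D * (p * a)) >= crho * t * (p * V * p / 2)) by (apply Rle_ge, Rmult_le_compat_l; [apply Rmult_le_pos; lra| auto]).
    assert (T5 : crho * t * (p * V * p / 2) = t * p * V * p + b * t * V * p) by (replace (crho * t * (p * V * p / 2)) with ((crho * p) * t * V * p / 2) by (field; lra); rewrite Hcp; field).
    assert (T6 : p * (b * s ^ 2) <= b * t * V * p) by (assert (0 < p * b) by pos; nra).
    assert (T7 : p * (p * V * (1 - a)) <= t * p * V * p) by nra.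
    nra. }
  assert (HXY : Rabs (Z * u - Y) <= Y * (crho * t)).
  { eapply Rle_trans. apply abs_sq_diff. apply Rlt_le; pos. auto.
    assert (E : (Z * u) ^ 2 - Y ^ 2 = Y ^ 2 * ((p ^ 2 * V - D * (p * a)) * / (D * (p * a)))).
    { rewrite HX2, HY2. field. repeat split; lra. }
    rewrite E. rewrite Rabs_mult. rewrite (Rabs_right (Y ^ 2)) by (apply Rle_ge, pow2_ge_0).
    rewrite Rabs_mult. rewrite (Rabs_right (/ (D * (p * a)))) by (apply Rle_ge, Rlt_le, Rinv_0_lt_compat; pos).
    assert (W : Rabs (p ^ 2 * V - D * (p * a)) * / (D * (p * a)) <= crho * t).
    { apply div_le. pos. lra. }
    replace (Y ^ 2 * (Rabs (p ^ 2 * V - D * (p * a)) * / (D * (p * a))) / Y) with (Y * (Rabs (p ^ 2 * V - D * (p * a)) * / (D * (p * a)))) by (field; lra).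
    apply Rmult_le_compat_l; lra. }
  assert (HE1 : 0 <= E1).
  { unfold E1. apply Rmult_le_pos; [| apply Rlt_le, Rinv_0_lt_compat; lra].
    assert (p * a * r * r <= p * r * r) by (assert (0 < p * r * r) by pos; nra).
    assert (0 <= b * s * r ^ 2) by (apply Rlt_le; pos). assert (0 <= s * r ^ 2) by (apply Rlt_le; pos). nra. }
  assert (HE2 : 0 <= E2).
  { unfold E2. apply Rplus_le_le_0_compat; apply Rmult_le_pos; try apply pow2_ge_0; apply Rlt_le, Rinv_0_lt_compat; lra. }
  assert (HE : Rabs (E1 - E2) <= cE * t).
  { assert (E : E1 - E2 = - (r ^ 2 * ((1 - a) ^ 2 * b * s ^ 2 / (D * V) + b * s ^ 2 / (p * D)))).
    { assert (HV' : 0 < p * (1 - a ^ 2) + s + b * s) by exact HV.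
      assert (HD' : 0 < p * V + b * s ^ 2) by lra.
      unfold E1, E2. rewrite HDV. unfold V. field. repeat split; apply Rgt_not_eq; first [exact HV' | exact HD' | lra]. }
    rewrite E, Rabs_Ropp.
    assert (F1 : (1 - a) ^ 2 * b * s ^ 2 / (D * V) <= b / p * t).
    { apply div_le. pos. 
      assert (T1 : (1 - a) ^ 2 <= t) by nra.
      assert (T2 : s ^ 2 <= V * V) by (assert (0 < b * s) by pos; assert (s <= V) by nra; nra).
      assert (T3 : p * V <= D) by (rewrite HDV; assert (0 < b * s^2) by pos; lra).
      assert (T4 : b / p * t * (D * V) >= b / p * t * (p * V * V)) by (apply Rle_ge, Rmult_le_compat_l; [apply Rmult_le_pos; [apply Rlt_le, Rdiv_lt_0_compat|]; lra| apply Rmult_le_compat_r; lra]).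
      replace (b / p * t * (p * V * V)) with (b * t * (V * V)) in T4 by (field; lra).
      assert (T5 : (1 - a) ^ 2 * b * s ^ 2 <= t * b * s ^ 2) by (apply Rmult_le_compat_r; [apply Rlt_le; pos| apply Rmult_le_compat_r; lra]).
      assert (T6 : t * b * s ^ 2 <= b * t * (V * V)) by (assert (0 < t * b) by pos; nra).
      lra. }
    assert (F2 : b * s ^ 2 / (p * D) <= b / p ^ 2 * t).
    { apply div_le. pos.
      assert (T3 : p * s <= D) by (rewrite HDV; assert (0 < b * s^2) by pos; nra).
      assert (T4 : b / p ^ 2 * t * (p * D) >= b / p ^ 2 * t * (p * (p * s))) by (apply Rle_ge, Rmult_le_compat_l; [apply Rmult_le_pos; [apply Rlt_le, Rdiv_lt_0_compat; pos|lra]| apply Rmult_le_compat_l; lra]).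
      replace (b / p ^ 2 * t * (p * (p * s))) with (b * t * s) in T4 by (field; lra).
      assert (b * s ^ 2 <= b * t * s) by (assert (0 < b * s) by pos; nra).
      lra. }
    assert (G1 : 0 <= (1 - a) ^ 2 * b * s ^ 2 / (D * V)) by (apply div_nonneg; [|pos]; assert (0 <= (1 - a) ^ 2) by apply pow2_ge_0; assert (0 < b * s ^ 2) by pos; nra).
    assert (G2 : 0 <= b * s ^ 2 / (p * D)) by (apply div_nonneg; [apply Rlt_le|]; pos).
    rewrite Rabs_right by (apply Rle_ge, Rmult_le_pos; [apply pow2_ge_0| lra]).
    unfold cE. assert (0 < r ^ 2) by pos. nra. }
  assert (Hik : 1 / kap <= CD * t / (r ^ 2 * p)).
  { unfold kap. replace (1 / (2 * r * r * (p * a) / D)) with (D / (2 * r * r * (p * a))) by (field; repeat split; lra).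
    apply div_le. pos. unfold Rdiv. 
    replace (CD * t * / (r ^ 2 * p) * (2 * r * r * (p * a))) with (CD * t * (2 * a)) by (field; split; lra).
    nra. }
  assert (Hed := exp_diff E1 E2 HE1 HE2).
  assert (He1 : exp (- E1) <= 1) by (apply exp_le1; auto).
  assert (He1p : 0 < exp (- E1)) by apply exp_pos.
  set (e1 := exp (- E1)) in *. set (e2 := exp (- E2)) in *. set (Mk := M kap) in *.
  set (X := Z * u) in *.
  assert (HX0 : 0 < X) by (unfold X; pos).
  assert (Hdec : e1 * Z * Mk - Y * e2 = e1 * Z * (Mk - u) + e1 * (X - Y) + Y * (e1 - e2)) by (unfold X; ring).
  rewrite Hdec.
  assert (B1 : Rabs (e1 * Z * (Mk - u)) <= 8 * X / kap).
  { rewrite !Rabs_mult. rewrite (Rabs_right e1) by lra. rewrite (Rabs_right Z) by lra.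
    apply Rle_trans with (1 * Z * (8 * u / kap)).
    apply Rmult_le_compat. apply Rmult_le_pos; lra. apply Rabs_pos. apply Rmult_le_compat_r; lra. auto.
    unfold X. right. field. lra. }
  assert (B2 : Rabs (e1 * (X - Y)) <= Y * (crho * t)).
  { rewrite Rabs_mult, (Rabs_right e1) by lra.
    apply Rle_trans with (1 * Rabs (X - Y)). apply Rmult_le_compat_r. apply Rabs_pos. auto. lra. }
  assert (B3 : Rabs (Y * (e1 - e2)) <= Y * (cE * t)).
  { rewrite Rabs_mult, (Rabs_right Y) by lra. apply Rmult_le_compat_l; lra. }
  assert (HXb : X <= Y * (1 + crho)).
  { assert (X - Y <= Y * (crho * t)) by (eapply Rle_trans; [apply Rle_abs| exact HXY]).
    assert (Y * (crho * t) <= Y * crho) by (apply Rmult_le_compat_l; [lra|]; assert (crho * t <= crho * 1) by (apply Rmult_le_compat_l; lra); lra).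
    lra. }
  assert (B4 : 8 * X / kap <= Y * (8 * (1 + crho) * CD / (r ^ 2 * p) * t)).
  { unfold Rdiv at 1. rewrite Rmult_assoc. 
    replace (/ kap) with (1 / kap) by (unfold Rdiv; ring).
    apply Rle_trans with (8 * (Y * (1 + crho) * (CD * t / (r ^ 2 * p)))).
    apply Rmult_le_compat_l. lra. apply Rmult_le_compat. lra. apply Rlt_le, Rdiv_lt_0_compat; lra. auto. auto.
    right. field. split; lra. }
  assert (Htot : Rabs (e1 * Z * (Mk - u) + e1 * (X - Y) + Y * (e1 - e2)) <= Y * t * C3).
  { eapply Rle_trans. apply Rabs_triang. eapply Rle_trans. apply Rplus_le_compat_r. apply Rabs_triang.
    unfold C3. assert (Y * t * (8 * (1 + crho) * CD / (r ^ 2 * p) + crho + cE) =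
      Y * (8 * (1 + crho) * CD / (r ^ 2 * p) * t) + Y * (crho * t) + Y * (cE * t)) by ring.
    lra. }
  eapply Rle_trans. exact Htot.
  assert (HYt : Y * t <= Cy * sqrt t).
  { apply sqrt_bound. apply Rlt_le; pos. lra. lra.
    unfold Cy. replace ((2 * r / (p * sqrt cm)) ^ 2) with (4 * r ^ 2 / (p ^ 2 * sqrt cm ^ 2)) by (field; split; [apply Rgt_not_eq, sqrt_lt_R0; lra| lra]).
    rewrite pow2_sqrt by lra.
    replace ((Y * t) ^ 2) with (Y ^ 2 * t ^ 2) by ring. rewrite HY2.
    apply Rle_trans with (4 * r ^ 2 / (p ^ 2 * (cm * t)) * t ^ 2).
    apply Rmult_le_compat_r. apply pow2_ge_0. unfold Rdiv. apply Rmult_le_compat_l. apply Rlt_le; pos.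
    apply Rinv_le_contravar. pos. 
    replace (p ^ 2 * PI * V) with (p ^ 2 * (PI * V)) by ring. apply Rmult_le_compat_l. apply pow2_ge_0. nra.
    right. field. repeat split; lra. }
  replace (C3 * Cy * sqrt t) with (C3 * (Cy * sqrt t)) by ring.
  replace (Y * t * C3) with (C3 * (Y * t)) by ring.
  apply Rmult_le_compat_l; lra.
Qed.


Theorem lemma4 (p b b' rA rB rE : R) :
  0 < p -> 0 < b -> 0 < b' -> 0 < rA -> 0 < rB -> 0 < rE ->
  (* pair (R_A, R_E) with sigma_E^2 = b sigma_A^2 *)
  envelope_asymptotic p b rA rE /\
  (* pair (R_B, R_E) with sigma_E^2 = b' sigma_B^2 (same law with A -> B) *)
  envelope_asymptotic p b' rB rE.
Proof.
  intros Hp Hb Hb' HA HB HE.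
  assert (G : forall bb r1, 0 < bb -> 0 < r1 -> envelope_asymptotic p bb r1 rE).
  { intros bb r1 Hbb Hr1. destruct (Req_dec r1 rE) as [Eq|Ne].
    - subst. apply asym_eq; auto.
    - apply asym_neq; auto. }
  split; apply G; auto.
Qed.

Print Assumptions lemma4.
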